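(* Let $\mathcal V,\mathcal W$ be operator spaces, let $\mathcal D\subseteq\mathcal V_{\rm nc}$ be a finitely open noncommutative set and $\mathcal E\subseteq\mathcal W_{\rm nc}$ a noncommutative set, and let $f\colon\mathcal D\to\mathcal E$ be a locally bounded noncommutative function. Then $\delta_{\mathcal E}(f(a),f(c))(\Delta f(a,c)(b))\le\delta_{\mathcal D}(a,c)(b)$ for all $m,n\in\mathbb N$, $a\in\mathcal D_n$, $c\in\mathcal D_m$, $b\in\mathcal V^{n\times m}$.
   Context: A noncommutative set is a family $\mathcal D=(\mathcal D_n)$, $\mathcal D_n\subseteq\mathcal V^{n\times n}$, closed under direct sums $a\oplus c=\begin{bmatrix}a&0\\0&c\end{bmatrix}$. It is finitely open if for each $n$ the intersection of $\mathcal D_n$ with any finite-dimensional subspace of $\mathcal V^{n\times n}$ is open in that subspace. A noncommutative function $f\colon\mathcal D\to\mathcal E$ maps $\mathcal D_n$ into $\mathcal E_n$ and respects intertwinings by scalar matrices: $aS=Sb\Rightarrow f(a)S=Sf(b)$ for $a\in\mathcal D_m,b\in\mathcal D_n,S\in\mathbb C^{m\times n}$. $\Delta f(a,c)\colon\mathcal V^{n\times m}\to\mathcal W^{n\times m}$ denotes the (linear) difference-differential of $f$, determined by $f\Big(\begin{bmatrix}a&b\\0&c\end{bmatrix}\Big)=\begin{bmatrix}f(a)&\Delta f(a,c)(b)\\0&f(c)\end{bmatrix}$ whenever the block matrix lies in $\mathcal D_{n+m}$. For $a\in\mathcal D_n,c\in\mathcal D_m,b\in\mathcal V^{n\times m}$,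 $\delta_{\mathcal D}(a,c)(b)=\big[\sup\{t\in[0,+\infty]\colon\begin{bmatrix}a&sb\\0&c\end{bmatrix}\in\mathcal D_{n+m}\ \forall s\in[0,t]\}\big]^{-1}\in[0,+\infty]$ ($1/0=+\infty$, $1/\infty=0$); similarly for $\mathcal E$. *)

(* Defs.v *)
From HB Require Import structures.
From mathcomp Require Import all_boot all_order all_algebra.
From mathcomp Require Import boolp classical_sets reals constructive_ereal ereal.
From mathcomp Require Import complex.
From Stdlib Require Import ClassicalEpsilon.

Set Implicit Arguments.
Unset Strict Implicit.
Unset Printing Implicit Defensive.

Import Order.TTheory GRing.Theory Num.Theory.
Local Open Scope ring_scope.

Definition cabs (R : realType) (z : R[i]) : R :=
  Num.sqrt (complex.Re z ^+ 2 + complex.Im z ^+ 2).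

Definition vnorm2 (R : realType) n (v : 'cV[R[i]]_n) : R :=
  Num.sqrt (\sum_i cabs (v i 0) ^+ 2).

Definition opnorm (R : realType) m n (A : 'M[R[i]]_(m, n)) : R :=
  sup [set vnorm2 (A *m v) | v in [set v : 'cV[R[i]]_n | vnorm2 v <= 1]].

Definition mxscale (R : realType) (V : lmodType R[i]) p q
  (l : R[i]) (x : 'M[V]_(p, q)) : 'M[V]_(p, q) := map_mx (fun v => l *: v) x.

Definition smx (R : realType) (V : lmodType R[i]) p q r
  (S : 'M[R[i]]_(p, q)) (x : 'M[V]_(q, r)) : 'M[V]_(p, r) :=
  \matrix_(i, j) \sum_k (S i k *: x k j).

Definition mxs (R : realType) (V : lmodType R[i]) p q r
  (x : 'M[V]_(p, q)) (S : 'M[R[i]]_(q, r)) : 'M[V]_(p, r) :=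
  \matrix_(i, j) \sum_k (S k j *: x i k).

Definition dsum (V : zmodType) n m (a : 'M[V]_n) (c : 'M[V]_m) : 'M[V]_(n + m) :=
  block_mx a 0 0 c.

(* Abstract operator space structure (Ruan's axioms): a norm on each
   M_n(V) such that
   (R1) ||alpha x beta||_m <= ||alpha|| ||x||_n ||beta||,
   (R2) ||x (+) y||_{n+m} = max(||x||_n, ||y||_m). *)
Definition is_operator_space (R : realType) (V : lmodType R[i])
  (nrm : forall n, 'M[V]_n -> R) : Prop :=
  [/\ (forall n (x : 'M[V]_n), nrm n x = 0 -> x = 0),
      (forall n (l : R[i]) (x : 'M[V]_n), nrm n (mxscale l x) = cabs l * nrm n x),
      (forall n (x y : 'M[V]_n), nrm n (x + y) <= nrm n x + nrm n y),
      (forall n m (x : 'M[V]_n) (y : 'M[V]_m),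
          nrm (n + m)%N (dsum x y) = Num.max (nrm n x) (nrm m y)) &
      (forall m n (al : 'M[R[i]]_(m, n)) (x : 'M[V]_n) (be : 'M[R[i]]_(n, m)),
          nrm m (mxs (smx al x) be) <= opnorm al * nrm n x * opnorm be)].

Definition nc_set (V : zmodType) (D : forall n, set 'M[V]_n) : Prop :=
  forall n m (a : 'M[V]_n) (c : 'M[V]_m), D n a -> D m c -> D (n + m)%N (dsum a c).

Definition span_mx (R : realType) (V : lmodType R[i]) n
  (s : seq 'M[V]_n) : set 'M[V]_n :=
  [set x | exists cs : seq R[i], size cs = size s /\
     x = \sum_(i < size s) mxscale (nth 0 cs i) (nth 0 s i)].

(* Finitely open: the intersection of D_n with any finite-dimensional
   subspace U of V^{n x n} is open in U. *)
Definition finitely_open (R : realType) (V : lmodType R[i])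
  (nrm : forall n, 'M[V]_n -> R) (D : forall n, set 'M[V]_n) : Prop :=
  forall n (s : seq 'M[V]_n) (x : 'M[V]_n),
    span_mx s x -> D n x ->
    exists eps : R, 0 < eps /\
      forall y, span_mx s y -> nrm n (y - x) < eps -> D n y.

Definition nc_fun (R : realType) (V W : lmodType R[i])
  (D : forall n, set 'M[V]_n) (E : forall n, set 'M[W]_n)
  (f : forall n, 'M[V]_n -> 'M[W]_n) : Prop :=
  (forall n x, D n x -> E n (f n x)) /\
  (forall m n (a : 'M[V]_m) (b : 'M[V]_n) (S : 'M[R[i]]_(m, n)),
      D m a -> D n b -> mxs a S = smx S b -> mxs (f m a) S = smx S (f n b)).

Definition locally_bounded (R : realType) (V W : lmodType R[i])
  (nV : forall n, 'M[V]_n -> R) (nW : forall n, 'M[W]_n -> R)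
  (D : forall n, set 'M[V]_n) (f : forall n, 'M[V]_n -> 'M[W]_n) : Prop :=
  forall n (a : 'M[V]_n), D n a ->
    exists r M : R, 0 < r /\
      forall x, D n x -> nV n (x - a) < r -> nW n (f n x) <= M.

Definition is_Delta (R : realType) (V W : lmodType R[i])
  (D : forall n, set 'M[V]_n) (f : forall n, 'M[V]_n -> 'M[W]_n)
  n m (a : 'M[V]_n) (c : 'M[V]_m) (L : 'M[V]_(n, m) -> 'M[W]_(n, m)) : Prop :=
  [/\ (forall b1 b2, L (b1 + b2) = L b1 + L b2),
      (forall (l : R[i]) b, L (mxscale l b) = mxscale l (L b)) &
      (forall b, D (n + m)%N (block_mx a b 0 c) ->
         f (n + m)%N (block_mx a b 0 c) = block_mx (f n a) (L b) 0 (f m c))].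

Definition Delta (R : realType) (V W : lmodType R[i])
  (D : forall n, set 'M[V]_n) (f : forall n, 'M[V]_n -> 'M[W]_n)
  n m (a : 'M[V]_n) (c : 'M[V]_m) : 'M[V]_(n, m) -> 'M[W]_(n, m) :=
  epsilon (inhabits (fun _ => 0)) (is_Delta D f a c).

Definition einv (R : realType) (x : \bar R) : \bar R :=
  match x with
  | EFin r => if r == 0 then +oo%E else (r^-1)%:E
  | +oo%E => 0%E
  | -oo%E => 0%E
  end.

Definition delta (R : realType) (V : lmodType R[i])
  (D : forall n, set 'M[V]_n) n m (a : 'M[V]_n) (c : 'M[V]_m)
  (b : 'M[V]_(n, m)) : \bar R :=
  einv (ereal_sup [set t : \bar R | (0 <= t)%E /\
     forall s : R, 0 <= s -> (s%:E <= t)%E ->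
       D (n + m)%N (block_mx a (mxscale (s%:C)%C b) 0 c)]).

(* Main.v *)
Require Import Defs.
From HB Require Import structures.
From mathcomp Require Import all_boot all_order all_algebra.
From mathcomp Require Import boolp classical_sets reals constructive_ereal ereal.
From mathcomp Require Import complex.
From Stdlib Require Import ClassicalEpsilon.
Set Implicit Arguments.
Unset Strict Implicit.
Unset Printing Implicit Defensive.
Import Order.TTheory GRing.Theory Num.Theory.
Local Open Scope ring_scope.

Section MX.
Variables (R : realType) (V : lmodType R[i]).

Lemma smx_row_col p q1 q2 r (P : 'M[R[i]]_(p, q1)) (Q : 'M[R[i]]_(p, q2))
  (y : 'M[V]_(q1, r)) (z : 'M[V]_(q2, r)) :
  smx (row_mx P Q) (col_mx y z) = smx P y + smx Q z.
Proof.
apply/matrixP=> i j; rewrite !mxE big_split_ord /=.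
by congr (_ + _); apply: eq_bigr => k _; rewrite ?row_mxEl ?col_mxEu ?row_mxEr ?col_mxEd.
Qed.

Lemma smx_col p1 p2 q r (P : 'M[R[i]]_(p1, q)) (Q : 'M[R[i]]_(p2, q))
  (y : 'M[V]_(q, r)) :
  smx (col_mx P Q) y = col_mx (smx P y) (smx Q y).
Proof.
apply/eqP; rewrite -[X in X == _]vsubmxK; apply/eqP; congr col_mx;
  apply/matrixP=> i j; rewrite !mxE; apply: eq_bigr => l _;
  by rewrite ?col_mxEu ?col_mxEd ?mxE ?col_mxEu ?col_mxEd.
Qed.

Lemma smx_rowr p q r1 r2 (P : 'M[R[i]]_(p, q))
  (y : 'M[V]_(q, r1)) (z : 'M[V]_(q, r2)) :
  smx P (row_mx y z) = row_mx (smx P y) (smx P z).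
Proof.
apply/eqP; rewrite -[X in X == _]hsubmxK; apply/eqP; congr row_mx;
  apply/matrixP=> i j; rewrite !mxE; apply: eq_bigr => l _;
  by rewrite ?row_mxEl ?row_mxEr ?mxE ?row_mxEl ?row_mxEr.
Qed.

Lemma mxs_row_col p q1 q2 r (x : 'M[V]_(p, q1)) (y : 'M[V]_(p, q2))
  (P : 'M[R[i]]_(q1, r)) (Q : 'M[R[i]]_(q2, r)) :
  mxs (row_mx x y) (col_mx P Q) = mxs x P + mxs y Q.
Proof.
apply/matrixP=> i j; rewrite !mxE big_split_ord /=.
by congr (_ + _); apply: eq_bigr => k _; rewrite ?row_mxEl ?col_mxEu ?row_mxEr ?col_mxEd.
Qed.

Lemma mxs_col p1 p2 q r (x : 'M[V]_(p1, q)) (y : 'M[V]_(p2, q))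
  (P : 'M[R[i]]_(q, r)) :
  mxs (col_mx x y) P = col_mx (mxs x P) (mxs y P).
Proof.
apply/eqP; rewrite -[X in X == _]vsubmxK; apply/eqP; congr col_mx;
  apply/matrixP=> i j; rewrite !mxE; apply: eq_bigr => l _;
  by rewrite ?col_mxEu ?col_mxEd ?mxE ?col_mxEu ?col_mxEd.
Qed.

Lemma mxs_rowr p q r1 r2 (x : 'M[V]_(p, q))
  (P : 'M[R[i]]_(q, r1)) (Q : 'M[R[i]]_(q, r2)) :
  mxs x (row_mx P Q) = row_mx (mxs x P) (mxs x Q).
Proof.
apply/eqP; rewrite -[X in X == _]hsubmxK; apply/eqP; congr row_mx;
  apply/matrixP=> i j; rewrite !mxE; apply: eq_bigr => l _;
  by rewrite ?row_mxEl ?row_mxEr ?mxE ?row_mxEl ?row_mxEr.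
Qed.

Lemma smx_block p1 p2 q1 q2 r1 r2
  (P : 'M[R[i]]_(p1, q1)) (Q : 'M[R[i]]_(p1, q2)) (P' : 'M[R[i]]_(p2, q1)) (Q' : 'M[R[i]]_(p2, q2))
  (A : 'M[V]_(q1, r1)) (B : 'M[V]_(q1, r2)) (C : 'M[V]_(q2, r1)) (D : 'M[V]_(q2, r2)) :
  smx (block_mx P Q P' Q') (block_mx A B C D) =
  block_mx (smx P A + smx Q C) (smx P B + smx Q D) (smx P' A + smx Q' C) (smx P' B + smx Q' D).
Proof.
rewrite /block_mx smx_col !smx_row_col !smx_rowr.
by rewrite !add_row_mx.
Qed.

Lemma mxs_block p1 p2 q1 q2 r1 r2
  (A : 'M[V]_(p1, q1)) (B : 'M[V]_(p1, q2)) (C : 'M[V]_(p2, q1)) (D : 'M[V]_(p2, q2))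
  (P : 'M[R[i]]_(q1, r1)) (Q : 'M[R[i]]_(q1, r2)) (P' : 'M[R[i]]_(q2, r1)) (Q' : 'M[R[i]]_(q2, r2)) :
  mxs (block_mx A B C D) (block_mx P Q P' Q') =
  block_mx (mxs A P + mxs B P') (mxs A Q + mxs B Q') (mxs C P + mxs D P') (mxs C Q + mxs D Q').
Proof.
rewrite /block_mx mxs_col !mxs_row_col !mxs_rowr.
by rewrite !add_row_mx.
Qed.

Lemma smx1 p r (x : 'M[V]_(p, r)) : smx 1%:M x = x.
Proof.
apply/matrixP=> i j; rewrite mxE (bigD1 i) //= big1 ?addr0.
  by rewrite mxE eqxx scale1r.
by move=> k /negbTE ki; rewrite mxE eq_sym ki scale0r.
Qed.

Lemma mxs1 p r (x : 'M[V]_(p, r)) : mxs x 1%:M = x.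
Proof.
apply/matrixP=> i j; rewrite mxE (bigD1 j) //= big1 ?addr0.
  by rewrite mxE eqxx scale1r.
by move=> k /negbTE ki; rewrite mxE ki scale0r.
Qed.

Lemma smx0l p q r (x : 'M[V]_(q, r)) : smx (0 : 'M[R[i]]_(p, q)) x = 0.
Proof. by apply/matrixP=> i j; rewrite !mxE big1 // => k _; rewrite mxE scale0r. Qed.

Lemma smx0r p q r (S : 'M[R[i]]_(p, q)) : smx S (0 : 'M[V]_(q, r)) = 0.
Proof. by apply/matrixP=> i j; rewrite !mxE big1 // => k _; rewrite mxE scaler0. Qed.

Lemma mxs0r p q r (x : 'M[V]_(p, q)) : mxs x (0 : 'M[R[i]]_(q, r)) = 0.
Proof. by apply/matrixP=> i j; rewrite !mxE big1 // => k _; rewrite mxE scale0r. Qed.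

Lemma mxs0l p q r (S : 'M[R[i]]_(q, r)) : mxs (0 : 'M[V]_(p, q)) S = 0.
Proof. by apply/matrixP=> i j; rewrite !mxE big1 // => k _; rewrite mxE scaler0. Qed.

Lemma smxD p q r (S T : 'M[R[i]]_(p, q)) (x : 'M[V]_(q, r)) : smx (S + T) x = smx S x + smx T x.
Proof. by apply/matrixP=> i j; rewrite !mxE -big_split; apply: eq_bigr => k _; rewrite mxE scalerDl. Qed.

Lemma mxs_scalar p r (l : R[i]) (x : 'M[V]_(p, r)) : mxs x l%:M = mxscale l x.
Proof.
apply/matrixP=> i j; rewrite !mxE (bigD1 j) //= big1 ?addr0.
  by rewrite mxE eqxx mulr1n.
by move=> k /negbTE ki; rewrite mxE ki mulr0n scale0r.
Qed.

Lemma smx_scalar p r (l : R[i]) (x : 'M[V]_(p, r)) : smx l%:M x = mxscale l x.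
Proof.
apply/matrixP=> i j; rewrite !mxE (bigD1 i) //= big1 ?addr0.
  by rewrite mxE eqxx mulr1n.
by move=> k /negbTE ki; rewrite mxE eq_sym ki mulr0n scale0r.
Qed.

Lemma mxscale1 p q (x : 'M[V]_(p, q)) : mxscale 1 x = x.
Proof. by apply/matrixP=> i j; rewrite mxE scale1r. Qed.
Lemma mxscale0 p q (x : 'M[V]_(p, q)) : mxscale 0 x = 0.
Proof. by apply/matrixP=> i j; rewrite !mxE scale0r. Qed.
Lemma mxscaler0 p q l : mxscale l (0 : 'M[V]_(p, q)) = 0.
Proof. by apply/matrixP=> i j; rewrite !mxE scaler0. Qed.
Lemma mxscaleD p q l (x y : 'M[V]_(p, q)) : mxscale l (x + y) = mxscale l x + mxscale l y.
Proof. by apply/matrixP=> i j; rewrite !mxE scalerDr. Qed.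
Lemma mxscaleA p q l l' (x : 'M[V]_(p, q)) : mxscale l (mxscale l' x) = mxscale (l * l') x.
Proof. by apply/matrixP=> i j; rewrite !mxE scalerA. Qed.
Lemma mxscaleK p q l (x y : 'M[V]_(p, q)) : l != 0 -> mxscale l x = mxscale l y -> x = y.
Proof.
move=> l0 /(congr1 (mxscale l^-1)); rewrite !mxscaleA mulVf // !mxscale1 //.
Qed.
Lemma mxscale_block p1 p2 q1 q2 l (A : 'M[V]_(p1, q1)) (B : 'M[V]_(p1, q2)) (C : 'M[V]_(p2, q1)) (D : 'M[V]_(p2, q2)) :
  mxscale l (block_mx A B C D) = block_mx (mxscale l A) (mxscale l B) (mxscale l C) (mxscale l D).
Proof. by rewrite /mxscale map_block_mx. Qed.
Lemma mxscale_col p1 p2 q l (A : 'M[V]_(p1, q)) (B : 'M[V]_(p2, q)) :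
  mxscale l (col_mx A B) = col_mx (mxscale l A) (mxscale l B).
Proof. by rewrite /mxscale map_col_mx. Qed.

Lemma block_shift n m (A : 'M[V]_n) (C : 'M[V]_m) l B :
  block_mx A (mxscale l B) 0 C = dsum A C + mxscale l (block_mx 0 B 0 0).
Proof.
by rewrite mxscale_block !mxscaler0 /dsum add_block_mx !addr0 !add0r.
Qed.

End MX.
Unset Implicit Arguments.
Ltac simpmx := do 4 rewrite ?mxs_col ?mxs_row_col ?smx_col ?smx_row_col ?mxs_rowr ?smx_rowr
  ?mxs1 ?smx1 ?mxs0r ?mxs0l ?smx0l ?smx0r ?row_mx0 ?col_mx0 ?addr0 ?add0r ?add_row_mx.

Section NC.
Variables (R : realType) (V W : lmodType R[i]).
Variables (D : forall n, set 'M[V]_n) (E : forall n, set 'M[W]_n)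
  (f : forall n, 'M[V]_n -> 'M[W]_n).
Hypothesis hf : nc_fun D E f.
Variables (n m : nat) (a : 'M[V]_n) (c : 'M[V]_m).
Hypotheses (Da : D n a) (Dc : D m c).

Let X (b : 'M[V]_(n, m)) : 'M[V]_(n + m) := block_mx a b 0 c.
Let g b := ursubmx (f (n + m)%N (X b)).

Lemma tri b : D (n + m)%N (X b) -> f _ (X b) = block_mx (f n a) (g b) 0 (f m c).
Proof.
move=> DX.
have h1 := hf.2 (n + m)%N n (X b) a (col_mx 1%:M 0) DX Da.
have h2 := hf.2 m (n + m)%N c (X b) (row_mx 0 1%:M) Dc DX.
rewrite /X /block_mx in h1 h2.
move: h1 h2; simpmx; move=> h1 h2.
have {h1} := h1 erefl; have {h2} := h2 erefl.
rewrite -[f _ (col_mx _ _)]submxK /block_mx.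
simpmx.
move=> /eq_row_mx [_ ->] /eq_col_mx [-> ->].
by rewrite /g /X /block_mx.
Qed.

Lemma homog b mu : D (n + m)%N (X b) -> D (n + m)%N (X (mxscale mu b)) ->
  g (mxscale mu b) = mxscale mu (g b).
Proof.
move=> D1 D2.
set S : 'M[R[i]]_(n + m) := block_mx 1%:M 0 0 mu%:M.
have h := hf.2 (n + m)%N (n + m)%N (X b) (X (mxscale mu b)) S D1 D2.
have e : mxs (X b) S = smx S (X (mxscale mu b)).
  rewrite /X /S mxs_block smx_block; simpmx; rewrite !mxs_scalar !smx_scalar ?mxscaler0.
  by [].
move: (h e); rewrite /S.
rewrite -[f _ (X b)]submxK -[f _ (X (mxscale mu b))]submxK.
rewrite mxs_block smx_block; simpmx; rewrite !mxs_scalar !smx_scalar.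
move=> /eq_block_mx [_ e2 _ _]; by rewrite /g e2.

Qed.

Let Z (b1 b2 : 'M[V]_(n, m)) : 'M[V]_((n + n) + m) := block_mx (dsum a a) (col_mx b1 b2) 0 c.

Lemma inter (P : 'M[R[i]]_(n, n + n)) b b1 b2 :
  D (n + m)%N (X b) -> D ((n + n) + m)%N (Z b1 b2) ->
  mxs a P = smx P (dsum a a) -> b = smx P (col_mx b1 b2) ->
  g b = smx P (ursubmx (f _ (Z b1 b2))).
Proof.
move=> D1 D2 e1 e2.
set S : 'M[R[i]]_(n + m, (n + n) + m) := block_mx P 0 0 1%:M.
have h := hf.2 (n + m)%N ((n + n) + m)%N (X b) (Z b1 b2) S D1 D2.
have e : mxs (X b) S = smx S (Z b1 b2).
  by rewrite /X /Z /S mxs_block smx_block; simpmx; rewrite e1 e2.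
move: (h e); rewrite /S.
rewrite -[f _ (X b)]submxK -[f _ (Z b1 b2)]submxK.
rewrite mxs_block smx_block; simpmx.
by move=> /eq_block_mx [_ e3 _ _]; rewrite ?block_mxKur /g e3 ?block_mxKur.
Qed.

Lemma addg b1 b2 : D (n + m)%N (X b1) -> D (n + m)%N (X b2) -> D (n + m)%N (X (b1 + b2)) ->
  D ((n + n) + m)%N (Z b1 b2) -> g (b1 + b2) = g b1 + g b2.
Proof.
move=> D1 D2 D3 DZ.
set G := ursubmx (f _ (Z b1 b2)).
have -> : g (b1 + b2) = smx (row_mx 1%:M 1%:M) G.
  by apply: inter => //; rewrite /dsum /block_mx; simpmx.
have -> : g b1 = smx (row_mx 1%:M 0) G.
  by apply: inter => //; rewrite /dsum /block_mx; simpmx.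
have -> : g b2 = smx (row_mx 0 1%:M) G.
  by apply: inter => //; rewrite /dsum /block_mx; simpmx.
by rewrite -[G]vsubmxK; simpmx.
Qed.

Variable (nV : forall n, 'M[V]_n -> R).
Hypotheses (hV : is_operator_space nV) (hDo : finitely_open nV D) (hD : nc_set D).

Lemma cabsR (s : R) : 0 <= s -> cabs (s%:C)%C = s.
Proof. by move=> s0; rewrite /cabs /= expr0n /= addr0 sqrtr_sqr ger0_norm. Qed.

Lemma small N (X0 Y : 'M[V]_N) : D N X0 ->
  exists e : R, 0 < e /\ forall s : R, 0 <= s -> s < e -> D N (X0 + mxscale (s%:C)%C Y).
Proof.
move=> DX0.
have sp : forall l : R[i], span_mx [:: X0; Y] (X0 + mxscale l Y).
  move=> l; exists [:: 1; l]; split => //.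
  by rewrite big_ord_recl big_ord_recl big_ord0 /= addr0 mxscale1.
have sp0 : span_mx [:: X0; Y] X0 by have := sp 0; rewrite mxscale0 addr0.
have [eps [eps0 H]] := hDo N _ _ sp0 DX0.
have nY : 0 < `|nV N Y| + 1 by rewrite ltr_wpDl.
exists (eps / (`|nV N Y| + 1)); split; first by rewrite divr_gt0.
move=> s s0 se; apply: H; first exact: sp.
rewrite addrC addKr.
case: hV => _ hs _ _ _.
rewrite hs cabsR //.
apply: (le_lt_trans (y := s * `|nV N Y|)); first by rewrite ler_wpM2l // real_ler_norm // num_real.
rewrite ltr_pdivlMr // in se.
apply: le_lt_trans se; rewrite mulrDr mulr1 lerDl //.
Qed.

Lemma smallX B : exists e : R, 0 < e /\ forall s : R, 0 <= s -> s < e ->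
  D (n + m)%N (X (mxscale (s%:C)%C B)).
Proof.
have [e [e0 H]] := small _ _ (block_mx 0 B 0 0) (hD _ _ _ _ Da Dc).
by exists e; split => // s s0 se; rewrite /X block_shift; apply: H.
Qed.

Lemma smallZ b1 b2 : exists e : R, 0 < e /\ forall s : R, 0 <= s -> s < e ->
  D ((n + n) + m)%N (Z (mxscale (s%:C)%C b1) (mxscale (s%:C)%C b2)).
Proof.
have [e [e0 H]] := small _ _ (block_mx 0 (col_mx b1 b2) 0 0) (hD _ _ _ _ (hD _ _ _ _ Da Da) Dc).
by exists e; split => // s s0 se; rewrite /Z -mxscale_col block_shift; apply: H.
Qed.

Definition sc (b : 'M[V]_(n, m)) : R :=
  epsilon (inhabits 1) (fun s : R => 0 < s /\ D (n + m)%N (X (mxscale (s%:C)%C b))).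

Lemma sc_spec b : 0 < sc b /\ D (n + m)%N (X (mxscale ((sc b)%:C)%C b)).
Proof.
have [e [e0 H]] := smallX b.
apply: (epsilon_spec (inhabits 1) (fun s : R => 0 < s /\ D (n + m)%N (X (mxscale (s%:C)%C b)))).
exists (e / 2); split; first by rewrite divr_gt0.
apply: H; first by rewrite divr_ge0 // ltW.
by rewrite ltr_pdivrMr // ltr_pMr // ltr1n.
Qed.

Definition L b := mxscale (((sc b)^-1)%:C)%C (g (mxscale ((sc b)%:C)%C b)).

Lemma Cnz (s : R) : 0 < s -> (s%:C)%C != 0.
Proof. by move=> s0; rewrite (fmorph_eq0 (real_complex R)) gt_eqF. Qed.
Arguments Cnz {s}.

Lemma KL b (s : R) : 0 < s -> D (n + m)%N (X (mxscale (s%:C)%C b)) ->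
  g (mxscale (s%:C)%C b) = mxscale (s%:C)%C (L b).
Proof.
move=> s0 Ds; have [p0 Dp] := sc_spec b.
set s1 := sc b in p0 Dp *.
have e : mxscale (s%:C)%C b = mxscale ((s / s1)%:C)%C (mxscale (s1%:C)%C b).
  by rewrite mxscaleA -rmorphM mulfVK // gt_eqF.
rewrite e homog -?e // /L mxscaleA -rmorphM.
by [].
Qed.

Lemma Lscale l b : L (mxscale l b) = mxscale l (L b).
Proof.
have [p1 D1] := sc_spec b; have [p2 D2] := sc_spec (mxscale l b).
set s1 := sc b in p1 D1; set s2 := sc (mxscale l b) in p2 D2.
apply: (mxscaleK (Cnz p2)).
rewrite -KL //.
set mu := (s2%:C)%C * l / (s1%:C)%C.
have e : mxscale (s2%:C)%C (mxscale l b) = mxscale mu (mxscale (s1%:C)%C b).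
  by rewrite !mxscaleA /mu mulfVK // Cnz.
rewrite e homog -?e // KL // !mxscaleA /mu mulfVK ?Cnz //.
Qed.

Lemma Ladd b1 b2 : L (b1 + b2) = L b1 + L b2.
Proof.
have [e1 [e10 H1]] := smallX b1; have [e2 [e20 H2]] := smallX b2.
have [e3 [e30 H3]] := smallX (b1 + b2); have [e4 [e40 H4]] := smallZ b1 b2.
set e := Num.min (Num.min e1 e2) (Num.min e3 e4).
have e0 : 0 < e by rewrite !lt_min e10 e20 e30 e40.
set s := e / 2.
have s0 : 0 < s by rewrite divr_gt0.
have se : s < e by rewrite ltr_pdivrMr // ltr_pMr // ltr1n.
move: se; rewrite !lt_min => /andP [/andP [se1 se2] /andP [se3 se4]].
have D1 := H1 s (ltW s0) se1; have D2 := H2 s (ltW s0) se2.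
have D3 := H3 s (ltW s0) se3; have D4 := H4 s (ltW s0) se4.
apply: (mxscaleK (Cnz s0)).
rewrite mxscaleD -!KL // mxscaleD addg // -mxscaleD //.
Qed.

Lemma Lthird b : D (n + m)%N (X b) -> f _ (X b) = block_mx (f n a) (L b) 0 (f m c).
Proof.
move=> Db; rewrite tri //; congr block_mx.
have := KL b 1 ltr01; rewrite rmorph1 !mxscale1; apply.
by [].  
Qed.

Lemma Delta_ex : is_Delta D f a c L.
Proof.
split; [exact: Ladd | exact: Lscale | exact: Lthird].
Qed.

End NC.

Lemma einv_anti (R : realType) (x y : \bar R) : (0 <= x)%E -> (x <= y)%E -> (einv y <= einv x)%E.
Proof.
case: x => [r| |] //; case: y => [r'| |] //=.
- rewrite !lee_fin => r0 rr'.
  case: (eqVneq r 0) => [_|rn0]; first exact: leey.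
  have rp : 0 < r by rewrite lt_def rn0 r0.
  have rp' : 0 < r' by apply: lt_le_trans rr'.
  rewrite gt_eqF // lee_fin lef_pV2 // ?posrE //.
- rewrite lee_fin => r0 _.
  by case: ifP => // _; rewrite lee_fin invr_ge0.
Qed.

Theorem corollary3p2 (R : realType) (V W : lmodType R[i])
  (nV : forall n, 'M[V]_n -> R) (nW : forall n, 'M[W]_n -> R)
  (hV : is_operator_space nV) (hW : is_operator_space nW)
  (D : forall n, set 'M[V]_n) (E : forall n, set 'M[W]_n)
  (hD : nc_set D) (hDo : finitely_open nV D) (hE : nc_set E)
  (f : forall n, 'M[V]_n -> 'M[W]_n)
  (hf : nc_fun D E f) (hlb : locally_bounded nV nW D f) :
  forall (n m : nat) (a : 'M[V]_n) (c : 'M[V]_m) (b : 'M[V]_(n, m)),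
    D n a -> D m c ->
    (delta E (f n a) (f m c) (Delta D f a c b) <= delta D a c b)%E.
Proof.
move=> n m a c b Da Dc.
have HL := Delta_ex R V W D E f hf n m a c Da Dc nV hV hDo hD.
have HD : is_Delta D f a c (Delta D f a c).
  exact: (epsilon_spec (inhabits (fun _ => 0)) (is_Delta D f a c) (ex_intro _ _ HL)).
case: HD => _ Hs Ht.
apply: einv_anti.
  apply: ereal_sup_ge; exists 0%E => //; split => // s s0 s0'.
  have -> : s = 0 by apply/le_anti; rewrite s0 -lee_fin s0'.
  by rewrite mxscale0; exact: (hD _ _ _ _ Da Dc).
apply: le_ereal_sup => t [t0 Ht'] ; split => // s s0 st.
have := hf.1 _ _ (Ht' s s0 st); rewrite Ht ?Hs //; exact: Ht'.
Qed.
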